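(* For any tree $T$, $\gamma_{oidR}(T)\ge 2\beta(T)+1$, and this bound is tight (there are trees attaining equality).
   Context: $\beta(T)$ is the vertex cover number of $T$. A DRD function of $G$ is $f:V(G)\to\{0,1,2,3\}$ such that every vertex with value $0$ has a neighbor with value $3$ or two neighbors with value $2$, and every vertex with value $1$ has a neighbor with value at least $2$; it is an OIDRD function if the set of vertices with value $0$ is independent, and $\gamma_{oidR}(G)$ is the minimum weight $\sum_v f(v)$ of an OIDRD function. *)

(* Defs.v *)
From mathcomp Require Import all_boot all_order.
Set Implicit Arguments. Unset Strict Implicit. Unset Printing Implicit Defensive.

Section Graphs.
Variable V : finType.
Variable e : rel V.

Definition simple_graph : Prop := symmetric e /\ irreflexive e.

Definition is_cycle (s : seq V) : bool := [&& 2 < size s, uniq s & cycle e s].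

Definition acyclic : Prop := forall s : seq V, ~~ is_cycle s.

Definition connected : Prop := forall x y : V, connect e x y.

Definition is_tree : Prop := [/\ simple_graph, 0 < #|V|, connected & acyclic].

Definition vertex_cover (S : {set V}) : bool :=
  [forall u, forall v, e u v ==> (u \in S) || (v \in S)].

Definition vc_number : nat :=
  #|[arg min_(S < [set: V] | vertex_cover S) #|S|]|.

Definition DRD (f : {ffun V -> 'I_4}) : bool :=
  [forall v,
     ((f v == 0 :> nat) ==>
        ([exists u, e v u && (f u == 3 :> nat)] ||
         [exists u, exists w, [&& u != w, e v u, e v w,
                                  (f u == 2 :> nat) & (f w == 2 :> nat)]]))
  && ((f v == 1 :> nat) ==> [exists u, e v u && (2 <= f u)])].

Definition OIDRD (f : {ffun V -> 'I_4}) : bool :=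
  DRD f && [forall u, forall w,
              [&& (f u == 0 :> nat) & (f w == 0 :> nat)] ==> ~~ e u w].

Definition weight (f : {ffun V -> 'I_4}) : nat := \sum_(v : V) (f v : nat).

Definition two4 : 'I_4 := inord 2.

Definition gamma_oidR : nat :=
  weight [arg min_(f < [ffun => two4] | OIDRD f) weight f].

End Graphs.

(* Main.v *)
Require Import Defs.
From mathcomp Require Import all_boot all_order.
From mathcomp Require Import zify.
Set Implicit Arguments. Unset Strict Implicit. Unset Printing Implicit Defensive.

Lemma cyc_contra (V : finType) (e : rel V) (acyc : acyclic e) u b v :
  uniq (u :: b) -> path e u b -> v \in b -> v != last u b ->
  e (last u b) u -> False.
Proof.
move=> Hu Hp Hv Hvl Hl.
have := acyc (u :: b); rewrite /is_cycle Hu /= rcons_path Hp Hl andbT.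
case: b Hu Hp Hv Hvl Hl => [|c [|d b]] //=.
by move=> _ _; rewrite inE => /eqP ->; rewrite eqxx.
Qed.

Lemma suffix_props (V : finType) (e : rel V) x s p1 u b :
  x :: s = p1 ++ u :: b -> uniq (x :: s) -> path e x s ->
  [/\ uniq (u :: b), path e u b & last x s = last u b].
Proof.
move=> E; rewrite E cat_uniq => /and3P[_ _ Hu]; move: E.
case: p1 => [|a p1] /= [-> ->] // Hp.
move: Hp; rewrite cat_path /= => /and3P[_ _ Hp].
by split => //; rewrite last_cat.
Qed.

Lemma back2 (V : finType) (e : rel V) (sym : symmetric e) (acyc : acyclic e)
   x s w1 w2 :
  uniq (x :: s) -> path e x s -> w1 \in x :: s -> w2 \in x :: s ->
  w1 != w2 -> w1 != last x s -> w2 != last x s ->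
  e (last x s) w1 -> e (last x s) w2 -> False.
Proof.
move=> Hu Hp H1 H2 n12 n1 n2 e1 e2.
have [p1 [b E]] : exists p1 b, x :: s = p1 ++ w1 :: b.
  by case/splitPr: H1 => p1 p2; exists p1, p2.
have [Hu1 Hp1 Hl1] := suffix_props E Hu Hp.
move: H2; rewrite E mem_cat inE (eq_sym w2) (negbTE n12) /=.
case/orP => Hw2.
  have [r1 [r2 E2]] : exists r1 r2, p1 = r1 ++ w2 :: r2.
    by case/splitPr: Hw2 => r1 r2; exists r1, r2.
  have E3 : x :: s = r1 ++ w2 :: (r2 ++ w1 :: b) by rewrite E E2 -catA.
  have [Hu2 Hp2 Hl2] := suffix_props E3 Hu Hp.
  apply: (cyc_contra acyc Hu2 Hp2 (v := w1)).
  - by rewrite mem_cat inE eqxx orbT.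
  - by rewrite -Hl2.
  - by rewrite -Hl2.
apply: (cyc_contra acyc Hu1 Hp1 Hw2).
- by rewrite -Hl1.
- by rewrite -Hl1.
Qed.

Definition leafy (V : finType) (e : rel V) (A : {set V}) y :=
  forall w1 w2, w1 \in A -> w2 \in A -> e y w1 -> e y w2 -> w1 = w2.

Lemma leaf_exists (V : finType) (e : rel V) (sym : symmetric e)
  (irr : irreflexive e) (acyc : acyclic e) (A : {set V}) :
  A != set0 -> exists2 y, y \in A & leafy e A y.
Proof.
case/set0Pn => x0 Hx0.
pose good x s := [&& uniq (x :: s), path e x s & all (mem A) (x :: s)].
have step : forall x s, good x s ->
   (exists2 y, y \in A & leafy e A y) \/ (exists w, good x (rcons s w)).
  move=> x s /and3P[Hu Hp Ha].
  have yA : last x s \in A by move/allP: Ha; apply; apply: mem_last.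
  case: (boolP [exists w1, exists w2, [&& w1 \in A, w2 \in A, e (last x s) w1,
            e (last x s) w2 & w1 != w2]]) => Hex; last first.
    left; exists (last x s) => // w1 w2 a1 a2 b1 b2.
    apply/eqP; apply: contraNT Hex => ne; apply/existsP; exists w1.
    by apply/existsP; exists w2; rewrite a1 a2 b1 b2 ne.
  case: (boolP [exists w, [&& w \in A, e (last x s) w & w \notin x :: s]]).
    case/existsP => w /and3P[wA ew wn]; right; exists w.
    rewrite /good -rcons_cons rcons_uniq wn Hu rcons_path Hp ew /=.
    by move: Ha; rewrite -cats1 all_cat /= wA andbT => /andP[-> ->].
  move=> Hno; exfalso.
  case/existsP: Hex => w1 /existsP[w2 /and5P[a1 a2 b1 b2 n12]].
  have inq w : w \in A -> e (last x s) w -> w \in x :: s.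
    move=> wA ew; apply: contraNT Hno => wn; apply/existsP; exists w.
    by rewrite wA ew.
  have nl w : e (last x s) w -> w != last x s.
    by move=> ew; apply: contraTneq ew => ->; rewrite irr.
  exact: (back2 sym acyc Hu Hp (inq _ a1 b1) (inq _ a2 b2) n12 (nl _ b1) (nl _ b2) b1 b2).
have main : forall k x s, #|V| - size (x :: s) <= k -> good x s ->
    exists2 y, y \in A & leafy e A y.
  elim=> [|k IH] x s Hk Hg; case: (step x s Hg) => // [[w Hw]].
    have := Hw; case/and3P => /card_uniqP Hc _ _.
    have := max_card [pred z in rcons (x :: s) w].
    rewrite -rcons_cons in Hc; rewrite Hc size_rcons; move: Hk => /=; lia.
  by apply: (IH x (rcons s w)) => //; move: Hk; rewrite /= size_rcons; lia.
by apply: (main #|V| x0 [::]); [rewrite leq_subr | rewrite /good /= Hx0].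
Qed.

Definition oedges (V : finType) (e : rel V) (A : {set V}) :=
  [set p : V * V | [&& p.1 \in A, p.2 \in A & e p.1 p.2]].

Lemma edge_bound (V : finType) (e : rel V) (sym : symmetric e)
  (irr : irreflexive e) (acyc : acyclic e) (A : {set V}) :
  A != set0 -> #|oedges e A| + 2 <= 2 * #|A|.
Proof.
move: {2}#|A| (erefl #|A|) => n; elim: n A => [|n IH] A HA An0.
  by move: An0; rewrite -cards_eq0 HA.
have [y yA ly] := leaf_exists sym irr acyc An0.
pose z := odflt y [pick z in A | e y z].
have sub : oedges e A \subset oedges e (A :\ y) :|: [set (y, z); (z, y)].
  apply/subsetP => -[a b]; rewrite !inE /= => /and3P[aA bA eab].
  have zP : forall w, w \in A -> e y w -> w = z.
    move=> w wA ew; rewrite /z; case: pickP => [z0 /andP[z0A ez0]|/(_ w)].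
      by apply: ly.
    by rewrite wA ew.
  case: (eqVneq a y) => [Ea|ay].
    by rewrite Ea in eab *; rewrite (zP b bA eab) eqxx orbT.
  case: (eqVneq b y) => [Eb|by_].
    by rewrite Eb in eab *; rewrite sym in eab; rewrite (zP a aA eab) eqxx !orbT.
  by rewrite aA bA eab.
have := subset_leq_card sub; rewrite cardsU cards2.
have cA : #|A| = (#|A :\ y|).+1 by rewrite (cardsD1 y A) yA.
case: (eqVneq (A :\ y) set0) => [E0|ne0].
  have Ay : forall a, a \in A -> a = y.
    move=> a aA; apply/eqP; apply: contraTT aA => ay.
    by have := in_set0 a; rewrite -E0 !inE ay /= => ->.
  have -> : oedges e A = set0.
    apply/setP => -[a b]; rewrite /oedges !inE /=.
    apply/negP => /and3P[aA bA]; rewrite (Ay a aA) (Ay b bA) irr //.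
  move=> _; rewrite cards0 cA E0 cards0; lia.
have := IH (A :\ y) ltac:(lia) ne0; rewrite cA; lia.
Qed.

Definition kprop (V : finType) (e : rel V) (A : {set V}) (S P : {set V})
   (mate : V -> V) :=
  (forall a b, a \in A -> b \in A -> e a b -> (a \in S) || (b \in S)) /\
  [/\ P \subset A,
      (forall v, mate (mate v) = v),
      (forall v, v \notin P -> mate v = v),
      (forall v, v \in P -> (mate v \in P) && e v (mate v))
    & 2 * #|S| <= #|P|].

Lemma konig (V : finType) (e : rel V) (sym : symmetric e)
  (irr : irreflexive e) (acyc : acyclic e) (A : {set V}) :
  exists S P mate, kprop e A S P mate.
Proof.
move: {2}#|A| (leqnn #|A|) => n; elim: n A => [|n IH] A HA.
  exists set0, set0, id; split; last by split; rewrite ?sub0set ?cards0 // => v; rewrite in_set0.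
  by move=> a b aA; move: HA; rewrite leqn0 cards_eq0 => /eqP E0; rewrite E0 in_set0 in aA.
case: (eqVneq A set0) => [E0|An0].
  exists set0, set0, id; split; last by split; rewrite ?sub0set ?cards0 // => v; rewrite in_set0.
  by move=> a b; rewrite E0 in_set0.
have [y yA ly] := leaf_exists sym irr acyc An0.
case: (pickP [pred z in A | e y z]) => [z /andP[zA ez]|noz]; last first.
  have [S [P [mate [Hc [HP Hi Hf Hm Hs]]]]] := IH (A :\ y)
     ltac:(by move: HA; rewrite (cardsD1 y A) yA).
  exists S, P, mate; split; last split => //.
  - move=> a b aA bA eab.
    case: (eqVneq a y) => [Ea|ay].
      by have := noz b; rewrite /= bA -Ea eab.
    case: (eqVneq b y) => [Eb|by_].
      by have := noz a; rewrite /= aA -Eb -sym eab.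
    by apply: Hc; rewrite // !inE ?ay ?by_.
  by apply: (subset_trans HP); apply: subsetDl.
have yz : y != z by apply: contraTneq ez => <-; rewrite irr.
have cA : #|A :\ y :\ z| <= n.
  move: HA; rewrite (cardsD1 y A) yA (cardsD1 z (A :\ y)) !inE zA eq_sym yz.
  by rewrite /= => /ltnW.
have [S [P [mate [Hc [HP Hi Hf Hm Hs]]]]] := IH (A :\ y :\ z) cA.
have yP : y \notin P by apply: contraTN isT => /(subsetP HP); rewrite !inE eqxx andbF.
have zP : z \notin P by apply: contraTN isT => /(subsetP HP); rewrite !inE eqxx.
pose mate2 v := if v == y then z else if v == z then y else mate v.
have m2P v : v \in P -> mate2 v = mate v.
  move=> vP; rewrite /mate2; case: eqP => [Ev|_]; first by rewrite -Ev vP in yP.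
  by case: eqP => [Ev|_] //; rewrite -Ev vP in zP.
have m2y : mate2 y = z by rewrite /mate2 eqxx.
have m2z : mate2 z = y by rewrite /mate2 eq_sym (negbTE yz) eqxx.
have m2o v : v != y -> v != z -> mate2 v = mate v.
  by move=> vy vz; rewrite /mate2 (negbTE vy) (negbTE vz).
exists (z |: S), (y |: (z |: P)), mate2; split; last split.
- move=> a b aA bA eab.
  rewrite !inE.
  case: (eqVneq a z) => [->|az] //.
  case: (eqVneq b z) => [->|bz]; first by rewrite ?orbT.
  case: (eqVneq a y) => [Ea|ay].
    by rewrite Ea in eab; rewrite (ly b z bA zA eab ez) eqxx in bz.
  case: (eqVneq b y) => [Eb|by_].
    by rewrite Eb sym in eab; rewrite (ly a z aA zA eab ez) eqxx in az.
  by rewrite /=; apply: Hc; rewrite // !inE ?ay ?by_ ?az ?bz.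
- apply/subsetP => v; rewrite !inE => /or3P[/eqP->|/eqP->|vP] //.
  by move/(subsetP HP): vP; rewrite !inE => /and3P[_ _ ->].
- move=> v.
  case: (eqVneq v y) => [->|vy]; first by rewrite m2y m2z.
  case: (eqVneq v z) => [->|vz]; first by rewrite m2z m2y.
  rewrite (m2o v) //.
  case: (boolP (v \in P)) => vP; last by rewrite Hf // m2o // Hf.
  have mP := Hm v vP; case/andP: mP => mP _.
  rewrite (m2o (mate v)) ?Hi //.
    by apply: contraNneq yP => <-.
  by apply: contraNneq zP => <-.
- move=> v; rewrite !inE !negb_or => /andP[vy /andP[vz vP]].
  by rewrite /mate2 (negbTE vy) (negbTE vz) Hf.
- move=> v; rewrite !inE => /or3P[/eqP->|/eqP->|vP].
  + by rewrite m2y eqxx orbT ez.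
  + by rewrite m2z eqxx sym ez.
  + by rewrite m2P //; case/andP: (Hm v vP) => -> ->; rewrite !orbT.
- rewrite !cardsU1 !inE negb_or yz yP zP /=.
  move: Hs; case: (z \notin S) => /=; lia.
Qed.

Lemma count_bound (V : finType) (e : rel V) (sym : symmetric e)
  (irr : irreflexive e) (acyc : acyclic e) (f : {ffun V -> 'I_4})
  (Hf : OIDRD e f) (P : {set V}) (mate : V -> V)
  (Hi : forall v, mate (mate v) = v)
  (Hm : forall v, v \in P -> (mate v \in P) && e v (mate v))
  (n0 : 0 < #|V|) : #|P| + 1 <= weight f.
Proof.
case/andP: Hf => /forallP Hd /forallP Hind.
have zero_nb x m : (f x : nat) = 0 -> (f m : nat) <= 2 ->
    exists h, [&& e x h, 2 <= f h & h != m].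
  move=> Ex Em; have /andP[H0 _] := Hd x.
  move: H0; rewrite Ex eqxx /=.
  case/orP => [/existsP[h /andP[eh /eqP fh]]|/existsP[h1 /existsP[h2 /and5P[n12 e1 e2 /eqP f1 /eqP f2]]]].
    by exists h; rewrite eh fh /=; apply: contraTneq Em => <-; rewrite fh.
  case: (eqVneq h1 m) => [E1|n1].
    exists h2; rewrite e2 f2 /=; apply: contraNneq n12 => ->; by rewrite E1.
  by exists h1; rewrite e1 f1 n1.
have one_nb x m : (f x : nat) = 1 -> (f m : nat) <= 1 ->
    exists h, [&& e x h, 2 <= f h & h != m].
  move=> Ex Em; have /andP[_ H1] := Hd x.
  move: H1; rewrite Ex eqxx /= => /existsP[h /andP[eh fh]].
  by exists h; rewrite eh fh /=; apply: contraTneq Em => <-; rewrite -ltnNge.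
pose L := [set x | ((f x : nat) <= 1) &&
   [exists h, [&& e x h, 2 <= f h & (x \notin P) || (h != mate x)]]].
have inL x h : (f x : nat) <= 1 -> e x h -> 2 <= f h -> h != mate x -> x \in L.
  move=> fx eh fh hm; rewrite inE fx /=; apply/existsP; exists h.
  by rewrite eh fh hm orbT.
have inL' x h : (f x : nat) <= 1 -> x \notin P -> e x h -> 2 <= f h -> x \in L.
  move=> fx xP eh fh; rewrite inE fx /=; apply/existsP; exists h.
  by rewrite eh fh xP.
pose hh x := odflt x [pick h | [&& e x h, 2 <= f h & (x \notin P) || (h != mate x)]].
have hhP x : x \in L -> [&& e x (hh x), 2 <= f (hh x) & (x \notin P) || (hh x != mate x)].
  rewrite inE => /andP[_ /existsP[h Hh]]; rewrite /hh.
  by case: pickP => [h' ->|/(_ h)] //; rewrite Hh.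
have Lf x : x \in L -> (f x : nat) <= 1 by rewrite inE => /andP[].
have hhL x : x \in L -> hh x \notin L.
  move=> xL; apply/negP => /Lf; case/and3P: (hhP x xL) => _ h2 _; lia.
pose M := [set (v, mate v) | v in P].
pose Cf := [set (x, hh x) | x in L].
pose Cb := [set (hh x, x) | x in L].
have cM : #|M| = #|P| by apply: card_imset => a b [].
have cCf : #|Cf| = #|L| by apply: card_imset => a b [].
have cCb : #|Cb| = #|L| by apply: card_imset => a b [].
have d1 : Cf :&: Cb = set0.
  apply/setP => p; rewrite !inE; apply/negP.
  case/andP => /imsetP[x xL ->] /imsetP[y yL [E1 E2]].
  by move: (hhL y yL); rewrite -E1 xL.
have d2 : M :&: (Cf :|: Cb) = set0.
  apply/setP => p; rewrite !inE; apply/negP.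
  case/andP => /imsetP[v vP ->] /orP[/imsetP[x xL [E1 E2]]|/imsetP[x xL [E1 E2]]].
    case/and3P: (hhP x xL) => _ _; rewrite -E2 -E1 vP eqxx //.
  have xP : x \in P by rewrite -E2; case/andP: (Hm v vP).
  case/and3P: (hhP x xL) => _ _; rewrite xP /= -E1 -E2 Hi eqxx //.
have cD : #|M :|: (Cf :|: Cb)| = #|P| + (#|L| + #|L|).
  by rewrite cardsU d2 cards0 subn0 cardsU d1 cards0 subn0 cM cCf cCb.
have sD : M :|: (Cf :|: Cb) \subset oedges e [set: V].
  apply/subsetP => p; rewrite !inE => /or3P[/imsetP[v vP ->]|/imsetP[x xL ->]|/imsetP[x xL ->]] /=.
  - by case/andP: (Hm v vP).
  - by case/and3P: (hhP x xL).
  - by case/and3P: (hhP x xL); rewrite sym.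
have eb := edge_bound sym irr acyc (A := [set: V]) ltac:(by rewrite -cards_eq0 cardsT -lt0n).
have cnt : #|P| + 2 * #|L| + 2 <= 2 * #|V|.
  by have := subset_leq_card sD; rewrite cD -cardsT; lia.
pose G v := 2 * (f v : nat) + 2 * (v \in L).
have sumG : \sum_v G v = 2 * weight f + 2 * #|L|.
  rewrite big_split /= -!big_distrr /= /weight; congr (_ + 2 * _).
  by rewrite -sum1_card [RHS]big_mkcond /=; apply: eq_bigr => v _; case: (v \in L).
have pairG v : v \in P -> 6 <= G v + G (mate v).
  move=> vP; case/andP: (Hm v vP) => uP evu.
  have mu : mate (mate v) = v := Hi v.
  have F1 : (f v : nat) = 0 -> (f (mate v) : nat) <= 2 -> v \in L.
    move=> E0 E2; have [h /and3P[eh fh hn]] := zero_nb v (mate v) E0 E2.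
    by apply: (inL v h) => //; rewrite E0.
  have F2 : (f v : nat) = 1 -> (f (mate v) : nat) <= 1 -> v \in L.
    move=> E0 E2; have [h /and3P[eh fh hn]] := one_nb v (mate v) E0 E2.
    by apply: (inL v h) => //; rewrite E0.
  have F3 : (f (mate v) : nat) = 0 -> (f v : nat) <= 2 -> mate v \in L.
    move=> E0 E2; rewrite -mu in E2.
    have [h /and3P[eh fh hn]] := zero_nb (mate v) (mate (mate v)) E0 E2.
    by apply: (inL (mate v) h) => //; rewrite E0.
  have F4 : (f (mate v) : nat) = 1 -> (f v : nat) <= 1 -> mate v \in L.
    move=> E0 E2; rewrite -mu in E2.
    have [h /and3P[eh fh hn]] := one_nb (mate v) (mate (mate v)) E0 E2.
    by apply: (inL (mate v) h) => //; rewrite E0.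
  have F5 : ~ ((f v : nat) = 0 /\ (f (mate v) : nat) = 0).
    case=> E1 E2; have := Hind v; move/forallP/(_ (mate v)).
    by rewrite E1 E2 evu.
  have := ltn_ord (f v); have := ltn_ord (f (mate v)).
  rewrite /G; move: F1 F2 F3 F4 F5.
  case: (v \in L); case: (mate v \in L) => /=; lia.
have unG v : v \notin P -> 2 <= G v.
  move=> vP; rewrite /G; case E: (f v : nat) => [|k] /=; last lia.
  have [h /and3P[eh fh _]] := zero_nb v v E ltac:(by rewrite E).
  by rewrite (inL' v h) // E.
have minj : injective mate := can_inj Hi.
have sP : 6 * #|P| <= 2 * \sum_(v in P) G v.
  have -> : 2 * \sum_(v in P) G v = \sum_(v in P) (G v + G (mate v)).
    rewrite [RHS]big_split /=.
    suff -> : \sum_(v in P) G (mate v) = \sum_(v in P) G v by lia.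
    rewrite [RHS](reindex_inj minj) /=; apply: eq_bigl => v.
    apply/idP/idP => [vP|mP]; first by case/andP: (Hm v vP).
    by rewrite -(Hi v); case/andP: (Hm _ mP).
  rewrite mulnC -sum_nat_const; apply: leq_sum => v; exact: pairG.
have sN : 2 * #|[predC P]| <= \sum_(v in [predC P]) G v.
  rewrite mulnC -sum_nat_const; apply: leq_sum => v; rewrite inE; exact: unG.
have cC := cardC P.
have sG : 2 * weight f + 2 * #|L| = \sum_(v in P) G v + \sum_(v in [predC P]) G v.
  rewrite -sumG [LHS](bigID (mem P)) /=; congr (_ + _).
move: sG sP sN cnt cC; rewrite /weight; lia.
Qed.

Lemma vc_le (V : finType) (e : rel V) (S : {set V}) :
  vertex_cover e S -> vc_number e <= #|S|.
Proof.
move=> HS; rewrite /vc_number; case: arg_minnP => [|S0 _ H]; last exact: H.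
by apply/forallP => u; apply/forallP => v; apply/implyP => _; rewrite inE.
Qed.

Lemma vc_spec (V : finType) (e : rel V) :
  exists2 S, vertex_cover e S & vc_number e = #|S|.
Proof.
rewrite /vc_number; case: arg_minnP => [|S0 H _]; last by exists S0.
by apply/forallP => u; apply/forallP => v; apply/implyP => _; rewrite inE.
Qed.

Lemma two4_OIDRD (V : finType) (e : rel V) : OIDRD e [ffun => two4].
Proof.
have t2 : (two4 : nat) = 2 by rewrite /two4 inordK.
apply/andP; split; first by apply/forallP => v; rewrite !ffunE t2.
by apply/forallP => u; apply/forallP => w; rewrite !ffunE t2.
Qed.

Lemma gamma_spec (V : finType) (e : rel V) :
  exists2 f, OIDRD e f & (gamma_oidR e = weight f /\
     forall g, OIDRD e g -> weight f <= weight g).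
Proof.
rewrite /gamma_oidR; case: arg_minnP => [|f Hf H]; last by exists f.
exact: two4_OIDRD.
Qed.

Lemma lower (V : finType) (e : rel V) :
  is_tree e -> 2 * vc_number e + 1 <= gamma_oidR e.
Proof.
case=> [[sym irr] n0 _ acyc].
have [f Hf [-> _]] := gamma_spec e.
have [S [P [mate [Hc [HP Hi Hf' Hm Hs]]]]] := konig sym irr acyc [set: V].
have cb := count_bound sym irr acyc Hf Hi Hm n0.
have vS : vertex_cover e S.
  apply/forallP => u; apply/forallP => v; apply/implyP => euv.
  by apply: Hc; rewrite ?inE.
have := vc_le vS; lia.
Qed.

Definition eK2 : rel bool := fun a b => a != b.

Lemma K2_tree : is_tree eK2.
Proof.
split.
- by split; [move=> [] [] | move=> []].
- by rewrite card_bool.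
- move=> x y; case: (eqVneq x y) => [->|nxy]; first exact: connect0.
  by apply: connect1.
- move=> s; rewrite /is_cycle; apply/negP => /and3P[Hs /card_uniqP Hu _].
  by move: (max_card (mem s)); rewrite Hu card_bool => H; move: Hs; rewrite ltnNge H.
Qed.

Lemma K2_vc : vc_number eK2 = 1.
Proof.
apply/eqP; rewrite eqn_leq; apply/andP; split.
  rewrite -(cards1 true); apply: vc_le.
  by apply/forallP => u; apply/forallP => v; apply/implyP; case: u; case: v; rewrite !inE.
have [S HS ->] := vc_spec eK2; rewrite lt0n cards_eq0; apply/negP => /eqP S0.
by move/forallP/(_ true)/forallP/(_ false): HS; rewrite S0 !in_set0.
Qed.

Lemma K2_gamma : gamma_oidR eK2 <= 3.
Proof.
have [f _ [-> H]] := gamma_spec eK2.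
pose g : {ffun bool -> 'I_4} := [ffun b : bool => if b then inord 3 else inord 0].
have g3 : (g true : nat) = 3 by rewrite ffunE inordK.
have g0 : (g false : nat) = 0 by rewrite ffunE inordK.
have Hg : OIDRD eK2 g.
  apply/andP; split.
    apply/forallP => -[]; rewrite ?g3 ?g0 //=.
    rewrite andbT; apply/orP; left; apply/existsP; exists true; by rewrite g3.
  by apply/forallP => -[]; apply/forallP => -[]; rewrite ?g3 ?g0.
apply: (leq_trans (H g Hg)).
by rewrite /weight big_bool /= g3 g0.
Qed.

Theorem theorem5 :
  (forall (V : finType) (e : rel V),
      is_tree e -> 2 * vc_number e + 1 <= gamma_oidR e)
  /\
  (exists (V : finType) (e : rel V),
      is_tree e /\ gamma_oidR e = 2 * vc_number e + 1).
Proof.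
split; first exact: lower.
exists bool, eK2; split; first exact: K2_tree.
apply/eqP; rewrite eqn_leq K2_vc; apply/andP; split; first exact: K2_gamma.
by have := lower K2_tree; rewrite K2_vc.
Qed.
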